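(* The kernel of the linear map $\mathcal{D}(\Lambda_{n,d})\to\mathcal{D}(\Lambda_{n,d})$, $y\mapsto Xy$ (the action of $X$ on the left regular module), has dimension $n^2d$.
   Context: $k$ is an algebraically closed field; $n,d$ integers with $d\geqslant2$, $d\mid n$, $\mathrm{char}\,k\nmid n$; $q$ a primitive $d$-th root of unity. $\Lambda_{n,d}$ is the path algebra of the cyclic quiver with vertices $e_i$ and arrows $a_i:e_i\to e_{i+1}$ ($i\in\mathbb{Z}_n$) modulo all paths of length $d$; $\gamma_i^m=a_{i+m-1}\cdots a_i$. $\mathcal{D}(\Lambda_{n,d})$ is the Drinfel'd double of the Hopf algebra $\Lambda_{n,d}$; concretely it has basis $G^iX^j\gamma_\ell^m$ ($i,\ell\in\mathbb{Z}_n$, $0\leqslant j,m\leqslant d-1$) and is generated by $G,X,e_i,a_i$ with relations $G^n=1$, $X^d=0$, $GX=q^{-1}XG$, products of paths as in $\Lambda_{n,d}$, $\gamma_\ell^mG=q^{-m}G\gamma_\ell^m$, $\gamma_\ell^mX=q^{-m}X\gamma_{\ell+1}^m-q^{-m}(m)_q\gamma_{\ell+1}^{m-1}+q^{\ell+1-m}(m)_qG\gamma_{\ell+1}^{m-1}$, where $(m)_q=1+q+\cdots+q^{m-1}$. *)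

(* Defs.v *)
From HB Require Import structures.
From mathcomp Require Import all_boot all_order all_algebra all_field.
Set Implicit Arguments. Unset Strict Implicit. Unset Printing Implicit Defensive.
Import GRing.Theory.
Local Open Scope ring_scope.

Section Double.
Variables (k : fieldType) (A : falgType k) (n d : nat) (q : k).
Variables (G X : A) (e a : 'I_n -> A).

Definition shiftI (l : 'I_n) (t : nat) : 'I_n := iter t (@ordS n) l.

Fixpoint apath (l : 'I_n) (m : nat) : A :=
  match m with
  | 0 => a l
  | m'.+1 => a (shiftI l m) * apath l m'
  end.

Definition gam (l : 'I_n) (m : nat) : A :=
  if m is m'.+1 then apath l m' else e l.

Definition qint (m : nat) : k := \sum_(t < m) q ^+ t.

Definition dbasis (p : 'I_n * 'I_d * 'I_n * 'I_d) : A :=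
  let: (i, j, l, m) := p in G ^+ i * X ^+ j * gam l m.

(* A is (a presentation of) the Drinfel'd double D(Lambda_{n,d}):
   generated by G, X, e_i, a_i with the listed relations, and with basis
   G^i X^j gamma_l^m (i,l in Z_n, 0 <= j,m <= d-1). *)
Definition is_double_Lambda : Prop :=
  [/\ [/\ G ^+ n = 1, X ^+ d = 0 & G * X = q^-1 *: (X * G)],
      (* path algebra Lambda_{n,d} = kQ / (paths of length d), with unit 1 *)
      [/\ \sum_(i < n) e i = 1,
          forall i j : 'I_n, e i * e j = if i == j then e i else 0,
          forall i j : 'I_n, a i * e j = if i == j then a i else 0,
          forall i j : 'I_n, e j * a i = if j == ordS i then a i else 0
        & (forall i j : 'I_n, j != ordS i -> a j * a i = 0)
          /\ (forall l : 'I_n, gam l d = 0)],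
      forall (l : 'I_n) (m : nat), gam l m * G = q ^- m *: (G * gam l m),
      forall (l : 'I_n) (m : nat), (m < d)%N ->
        gam l m * X = q ^- m *: (X * gam (ordS l) m)
                      - (q ^- m * qint m) *: gam (ordS l) m.-1
                      + (q ^ (l%:Z + 1 - m%:Z) * qint m) *: (G * gam (ordS l) m.-1)
    & basis_of fullv [seq dbasis p | p : 'I_n * 'I_d * 'I_n * 'I_d]].

End Double.

(* Main.v *)
Require Import Defs.
From HB Require Import structures.
From mathcomp Require Import all_boot all_order all_algebra all_field.
Local Open Scope ring_scope.
Import GRing.Theory.

Theorem mainTheorem10 (k : closedFieldType) (n d : nat) (q : k)
  (Hd : (2 <= d)%N) (Hdn : (d %| n)%N) (Hchar : n%:R != 0 :> k)
  (Hq : d.-primitive_root q)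
  (A : falgType k) (G X : A) (e a : 'I_n -> A)
  (HA : @is_double_Lambda k A n d q G X e a) :
  \dim (lker (amull X)) = (n ^ 2 * d)%N.
Proof.
case: HA => [[_ Xd GX] _ _ _ hB].
have d0 : (0 < d)%N by apply: leq_trans Hd.
have q0 : q != 0.
  apply/negP => /eqP q0; move: (prim_expr_order Hq); rewrite q0 expr0n.
  by rewrite gtn_eqF // => /eqP; rewrite eq_sym oner_eq0.
have XG : X * G = q *: (G * X) by rewrite GX scalerA mulfV // scale1r.
have XGi : forall i, X * G ^+ i = q ^+ i *: (G ^+ i * X).
  elim=> [|i IH]; first by rewrite expr0 mulr1 mul1r scale1r.
  rewrite exprS mulrA XG -scalerAl -(mulrA G X) IH -scalerAr scalerA -exprS.
  by rewrite mulrA !exprS.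
pose b := @dbasis k A n d G X e a.
pose f := amull X.
have fB : forall i j l m, f (b (i, j, l, m)) = q ^+ i *: (G ^+ i * X ^+ j.+1 * gam e a l m).
  move=> i j l m; rewrite /f /b /= lfunE /= !mulrA XGi -!scalerAl.
  by rewrite -(mulrA (G ^+ i) X) -exprS.
pose P := ('I_n * 'I_d * 'I_n * 'I_d)%type.
pose S1 := [set p : P | p.1.1.2 != 0%N :> nat].
pose s1 := [seq b p | p in S1].
have freeB := basis_free hB.
have spanB := span_basis hB.
have dimA : \dim (fullv : {vspace A}) = (#|S1| + #|~: S1|)%N.
  by rewrite -spanB (eqnP freeB) size_image cardsC.
have freeS1 : free s1.
  have: perm_eq [seq b p | p : P] (s1 ++ [seq b p | p in ~: S1]).
    rewrite /image_mem -map_cat; apply: perm_map.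
    apply: uniq_perm.
    - exact: enum_uniq.
    - rewrite cat_uniq !enum_uniq /= andbT; apply/hasPn => p.
      by rewrite !mem_enum in_setC => /negbTE ->.
    - by move=> p; rewrite mem_cat !mem_enum in_setC orbN.
  by move/perm_free; rewrite freeB => /esym/catl_free.
have dimS1 : \dim <<s1>>%VS = #|S1| by rewrite (eqnP freeS1) size_image.
have img : limg f = <<s1>>%VS.
  rewrite -spanB limg_span; apply/eqP; rewrite eqEsubv; apply/andP; split.
  - apply/span_subvP => v /mapP [w /imageP [[[[i j] l] m] _ ->] ->].
    rewrite fB; case: (ltnP j.+1 d) => hj.
      apply: memvZ; apply: memv_span; apply/imageP.
      by exists (i, Ordinal hj, l, m); rewrite // inE.
    have -> : j.+1 = d by apply/eqP; rewrite eqn_leq hj ltn_ord.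
    by rewrite Xd mulr0 mul0r scaler0 mem0v.
  - apply/span_subvP => v /imageP [[[[i j] l] m]]; rewrite inE /= => hj ->.
    have hj' : (j.-1 < d)%N by apply: leq_ltn_trans (leq_pred j) (ltn_ord j).
    have E : b (i, j, l, m) = q ^- i *: f (b (i, Ordinal hj', l, m)).
      rewrite fB /= prednK ?lt0n // scalerA mulVf ?expf_neq0 // scale1r.
      by [].
    rewrite (_ : G ^+ i * X ^+ j * gam e a l m = b (i, j, l, m)) // E.
    apply: memvZ; apply: memv_span; apply: map_f.
    by apply/imageP; exists (i, Ordinal hj', l, m).
have := limg_ker_dim f fullv; rewrite capfv img dimS1 dimA.
rewrite addnC => /addnI ->.
pose J0 := [set j : 'I_d | j == 0%N :> nat].
have -> : ~: S1 = setX (setX (setX [set: 'I_n] J0) [set: 'I_n]) [set: 'I_d].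
  apply/setP => -[[[i j] l] m]; by rewrite !inE /= negbK !andbT.
have -> : J0 = [set Ordinal d0] by apply/setP => j; rewrite !inE -val_eqE.
by rewrite !cardsX !cardsT cards1 !card_ord muln1 expnS expn1.
Qed.
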